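(* Let $n\ge 2$ and let $p=a_1a_2\cdots a_n$ be a permutation of $\{1,\dots,n\}$ such that $a_{j+1}=a_j+1$ for some $j\in\{1,\dots,n-1\}$. Let $\hat p|_{\{a_j\}}$ denote the permutation of $\{1,\dots,n-1\}$ that is order-isomorphic to the sequence obtained from $p$ by deleting the entry $a_j$. Then $p$ is achievable by two stacks in series if and only if $\hat p|_{\{a_j\}}$ is achievable by two stacks in series.
   Context: Two stacks in series: a machine with an input stream, a first stack, a second stack and an output stream, with three moves: $\rho$ moves the next element of the input onto the top of the first stack; $\lambda$ moves the top element of the first stack onto the top of the second stack; $\mu$ moves the top element of the second stack to the end of the output. A permutation $q$ of $\{1,\dots,m\}$ is achievable if, starting with input $1,2,\dots,m$ (in this order) and both stacks empty, some finite sequence of these moves ends with empty input, empty stacks, and output equal to $q$. *)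

(* Defs.v *)
From mathcomp Require Import all_boot.
Set Implicit Arguments. Unset Strict Implicit. Unset Printing Implicit Defensive.

(* A configuration of the machine: (input, first stack, second stack, output).
   Stacks are lists with the top element at the head; the output is read left
   to right, new elements are appended at the end. *)
Definition config := (seq nat * seq nat * seq nat * seq nat)%type.

Inductive move : config -> config -> Prop :=
| move_rho x inp s1 s2 out :
    move (x :: inp, s1, s2, out) (inp, x :: s1, s2, out)
| move_lambda x inp s1 s2 out :
    move (inp, x :: s1, s2, out) (inp, s1, x :: s2, out)
| move_mu x inp s1 s2 out :
    move (inp, s1, x :: s2, out) (inp, s1, s2, rcons out x).

Inductive reach : config -> config -> Prop :=
| reach_refl c : reach c c
| reach_step c1 c2 c3 : move c1 c2 -> reach c2 c3 -> reach c1 c3.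

Definition achievable (q : seq nat) : Prop :=
  reach (iota 1 (size q), [::], [::], [::]) ([::], [::], [::], q).

Definition is_perm (m : nat) (q : seq nat) : Prop := perm_eq q (iota 1 m).

Definition delete_at (i : nat) (s : seq nat) : seq nat :=
  take i s ++ drop i.+1 s.

Definition order_iso (s t : seq nat) : Prop :=
  size s = size t /\
  forall i k, i < size s -> k < size s ->
    (nth 0 s i < nth 0 s k) = (nth 0 t i < nth 0 t k).

(* Main.v *)
Require Import Defs.
From mathcomp Require Import all_boot zify.

Definition mapc (f : nat -> nat) (c : config) : config :=
  let: (a, b, c', d) := c in (map f a, map f b, map f c', map f d).

Lemma reach_map f c1 c2 : reach c1 c2 -> reach (mapc f c1) (mapc f c2).
Proof.
elim=> [c|a b c3 hm _ IH]; first exact: reach_refl.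
apply: (reach_step _ IH).
case: hm => x inp s1 s2 out /=; rewrite ?map_rcons; constructor.
Qed.

Definition filterc (P : pred nat) (c : config) : config :=
  let: (a, b, c', d) := c in (filter P a, filter P b, filter P c', filter P d).

Lemma reach_filter P c1 c2 : reach c1 c2 -> reach (filterc P c1) (filterc P c2).
Proof.
elim=> [c|a b c3 hm _ IH]; first exact: reach_refl.
move: IH; case: hm => x inp s1 s2 out /=; rewrite ?filter_rcons;
  case: (P x) => IH //; apply: (reach_step _ IH); constructor.
Qed.

Definition Eb v x := if x == v.+1 then [:: v; v.+1] else [:: x].
Definition Eb' v x := if x == v.+1 then [:: v.+1; v] else [:: x].

Definition expc v (c : config) : config :=
  let: (a, b, c', d) := c in
  (flatten (map (Eb v) a), flatten (map (Eb' v) b),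
   flatten (map (Eb v) c'), flatten (map (Eb v) d)).

Lemma reach_expand v c1 c2 : reach c1 c2 -> reach (expc v c1) (expc v c2).
Proof.
elim=> [c|a b c3 hm _ IH]; first exact: reach_refl.
move: IH; case: hm => x inp s1 s2 out /=; rewrite ?map_rcons ?flatten_rcons;
  rewrite /Eb /Eb'; case: eqP => _ /= IH.
- apply: reach_step; first constructor. apply: reach_step; first constructor. exact IH.
- apply: (reach_step _ IH); constructor.
- apply: reach_step; first constructor. apply: reach_step; first constructor. exact IH.
- apply: (reach_step _ IH); constructor.
- apply: reach_step; first constructor. apply: reach_step; first constructor.
  by rewrite -!cats1 -catA.
- apply: (reach_step _ IH); rewrite cats1; constructor.
Qed.

Lemma count_lt_iota x a k : count (fun y => y < x) (iota a k) = minn (x - a) k.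
Proof.
elim: k a => [|k IH] a /=; first by rewrite minn0.
rewrite IH; case: ltnP => h /=; lia.
Qed.

Lemma perm_rank m s t : perm_eq s (iota 1 m) -> perm_eq t (iota 1 m) ->
  size s = size t ->
  (forall i k, i < size s -> k < size s ->
     (nth 0 s i < nth 0 s k) = (nth 0 t i < nth 0 t k)) -> s = t.
Proof.
move=> ps pt sz H; apply: (eq_from_nth (x0:=0)) => // i ilt.
have key u : perm_eq u (iota 1 m) -> forall i, i < size u ->
    nth 0 u i = (count (fun k => nth 0 u k < nth 0 u i) (iota 0 (size u))).+1.
  move=> pu i' hi.
  have mem : nth 0 u i' \in iota 1 m by rewrite -(perm_mem pu) mem_nth.
  have -> : count (fun k => nth 0 u k < nth 0 u i') (iota 0 (size u))
          = count (fun y => y < nth 0 u i') u.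
    transitivity (count (fun y => y < nth 0 u i') (map (nth 0 u) (iota 0 (size u)))).
      by rewrite count_map.
    by rewrite -/(mkseq _ _) mkseq_nth.
  rewrite (permP pu) count_lt_iota. rewrite mem_iota in mem. lia.
rewrite (key s ps i ilt) (key t pt i); last by rewrite -sz.
rewrite -sz; congr S; apply: eq_in_count => k; rewrite mem_iota => /andP[_ hk].
exact: H.
Qed.

Section K.
Variable v : nat.

Lemma flat_id A : v.+1 \notin A -> flatten (map (Eb v) A) = A.
Proof.
elim: A => //= x A IH; rewrite inE negb_or => /andP[xne /IH ->].
by rewrite /Eb eq_sym (negbTE xne).
Qed.

Lemma filt_id A : v \notin A -> filter (predC1 v) A = A.
Proof.
elim: A => //= x A IH; rewrite inE negb_or => /andP[xne /IH ->].
by rewrite eq_sym xne.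
Qed.

Lemma Klem A B : v \notin A -> v \notin B -> v.+1 \notin A -> v.+1 \notin B ->
  flatten (map (Eb v) (filter (predC1 v) (A ++ v :: v.+1 :: B))) = A ++ v :: v.+1 :: B.
Proof.
move=> a b a' b'.
rewrite filter_cat /= eqxx /= (_ : (v.+1 != v) = true); last by lia.
rewrite !filt_id // map_cat flatten_cat /= flat_id // flat_id //.
by rewrite /Eb eqxx.
Qed.
End K.

Definition hf v x := if x < v then x else x.-1.
Definition ff v x := if x < v then x else x.+1.

Lemma hmono v x y : x != v -> y != v -> (hf v x < hf v y) = (x < y).
Proof.
rewrite /hf.
move=> hx hy; case: (ltnP x v) => h1; case: (ltnP y v) => h2; apply/idP/idP; lia.
Qed.

Theorem mainTheorem1 (n : nat) (p : seq nat) (j : nat) (q : seq nat) :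
  2 <= n ->
  is_perm n p ->
  j.+1 < n ->
  nth 0 p j.+1 = (nth 0 p j).+1 ->
  is_perm n.-1 q ->
  order_iso (delete_at j p) q ->
  (achievable p <-> achievable q).
Proof.
move=> n2 pp jn hv pq [szd oi].
set v := nth 0 p j in hv.
have szp : size p = n by rewrite (perm_size pp) size_iota.
have szq : size q = n.-1 by rewrite (perm_size pq) size_iota.
have up : uniq p by rewrite (perm_uniq pp) iota_uniq.
have vin : v \in iota 1 n.
 rewrite -(perm_mem pp); apply: mem_nth. rewrite szp. lia.
have v1in : v.+1 \in iota 1 n by rewrite -(perm_mem pp) -hv; apply: mem_nth; rewrite szp; lia.
rewrite !mem_iota in vin v1in.
set A := take j p; set B := drop j.+2 p.
have hdj : drop j.+1 p = v.+1 :: B by rewrite (drop_nth 0) ?hv // szp.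
have pdec : p = A ++ v :: v.+1 :: B by rewrite -hdj -(drop_nth 0) ?cat_take_drop // szp; lia.
have [vA v1A vB v1B] : [/\ v \notin A, v.+1 \notin A, v \notin B & v.+1 \notin B].
  move: up; rewrite pdec cat_uniq /= !inE !negb_or /=.
  by case/and5P => _ /and3P[-> -> _] /andP[_ ->] -> _.
have dE : delete_at j p = A ++ v.+1 :: B by rewrite /delete_at hdj.
have fE : filter (predC1 v) p = A ++ v.+1 :: B.
  rewrite {1}pdec filter_cat /= eqxx /= !filt_id //.
  by rewrite (_ : (v.+1 != v) = true) //; lia.
have I2 : iota 1 n = iota 1 v.-1 ++ v :: v.+1 :: iota v.+2 (n - v.+1).
  have e : n = v.-1 + (2 + (n - v.+1)) by lia.
  have e2 : 1 + v.-1 = v by lia.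
  by rewrite {1}e iotaD iotaD e2 /= addn2.
have F : filter (predC1 v) (iota 1 n) = iota 1 v.-1 ++ iota v.+1 (n - v).
  rewrite I2 filter_cat /= eqxx /= !filt_id ?mem_iota; try lia.
  rewrite (_ : (v.+1 != v) = true); last by lia.
  by rewrite (_ : n - v = (n - v.+1).+1) //; lia.
have I1 : map (hf v) (filter (predC1 v) (iota 1 n)) = iota 1 n.-1.
  rewrite F map_cat.
  have -> : map (hf v) (iota 1 v.-1) = iota 1 v.-1.
    rewrite -{2}(map_id (iota 1 v.-1)); apply/eq_in_map => x.
    rewrite mem_iota /hf => hx; case: (ltnP x v); lia.
  have -> : iota v.+1 (n - v) = map (addn 1) (iota v (n - v)) by rewrite -iotaDl.
  rewrite -map_comp.
  have -> : map (hf v \o addn 1) (iota v (n - v)) = iota v (n - v).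
    rewrite -{2}(map_id (iota v (n - v))); apply/eq_in_map => x.
    by rewrite mem_iota /= /hf => hx; case: (ltnP (1 + x) v); lia.
  have e : n.-1 = v.-1 + (n - v) by lia.
  have e2 : 1 + v.-1 = v by lia.
  by rewrite e iotaD e2.
have dF : delete_at j p = filter (predC1 v) p by rewrite dE fE.
have dnv : forall x, x \in delete_at j p -> x != v.
  by move=> x; rewrite dF mem_filter => /andP[].
have qE : q = map (hf v) (delete_at j p).
  symmetry; apply: (@perm_rank n.-1).
  - rewrite -I1 dF; apply: perm_map; apply: perm_filter; exact: pp.
  - exact: pq.
  - by rewrite size_map szd.
  - move=> i k; rewrite size_map => hi hk.
    rewrite !(nth_map 0) // -oi // hmono //; apply: dnv; exact: mem_nth.
have fh : forall x, x != v -> ff v (hf v x) = x.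
  move=> x; rewrite /ff /hf; case: (ltnP x v) => h1 h2; case: ltnP; lia.
have mfq : map (ff v) q = delete_at j p.
  rewrite qE -map_comp -{2}(map_id (delete_at j p)); apply/eq_in_map => x /dnv.
  exact: fh.
have mfi : map (ff v) (iota 1 n.-1) = filter (predC1 v) (iota 1 n).
  rewrite -I1 -map_comp -{2}(map_id (filter _ _)); apply/eq_in_map => x.
  rewrite mem_filter => /andP[h1 _]; exact: fh.
split.
- rewrite /achievable szq szp => ap.
  have := reach_map (hf v) _ _ (reach_filter (predC1 v) _ _ ap).
  by rewrite /= I1 -dF -qE.
- rewrite /achievable szq szp => aq.
  have X1 : flatten (map (Eb v) (filter (predC1 v) (iota 1 n))) = iota 1 n.
    by rewrite I2 Klem // ?mem_iota; lia.
  have X2 : flatten (map (Eb v) (filter (predC1 v) p)) = p.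
    by rewrite pdec Klem.
  have := reach_expand v _ _ (reach_map (ff v) _ _ aq).
  by rewrite /= mfi mfq dF X1 X2.
Qed.
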